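(* Let $G, H$ and $G_1,\dots,G_n$ be abelian groups with tiles $T \subset G$ and $U_i \subset G_i$, and let $\rho : G \to H$ be a surjective homomorphism that is injective on $T$. If $G_1\times\dots\times G_n\times H$ is $(U_1,\dots,U_n,\rho(T))$-tilable, then $G_1\times\dots\times G_n\times G$ is $(U_1,\dots,U_n,T)$-tilable.
   Context: A tile in an abelian group is a non-empty subset. Given abelian groups $K_1,\dots,K_r$ and tiles $V_j\subset K_j$, let $\mathsf{V}_j \subset K_1\times\dots\times K_r$ be the set of points whose $j$-th coordinate lies in $V_j$ and whose other coordinates are $0$. A copy of $V_j$ is a translate $\mathsf{V}_j + x$ with $x \in K_1\times\dots\times K_r$. A subset of $K_1\times\dots\times K_r$ is $(V_1,\dots,V_r)$-tilable if it is a disjoint union of copies of $V_1,\dots,V_r$. *)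

(* Defs.v *)
From HB Require Import structures.
From mathcomp Require Import all_boot all_algebra.
Set Implicit Arguments. Unset Strict Implicit. Unset Printing Implicit Defensive.
Import GRing.Theory.
Local Open Scope ring_scope.

Definition tile (K : zmodType) (V : K -> Prop) : Prop := exists v, V v.

Definition prodpt (r : nat) (K : 'I_r -> zmodType) := forall i : 'I_r, K i.

Definition embed_tile (r : nat) (K : 'I_r -> zmodType)
  (V : forall j : 'I_r, K j -> Prop) (j : 'I_r) : prodpt K -> Prop :=
  fun x => V j (x j) /\ (forall i : 'I_r, i != j -> x i = 0).

Definition copy (r : nat) (K : 'I_r -> zmodType)
  (V : forall j : 'I_r, K j -> Prop) (j : 'I_r) (a : prodpt K) : prodpt K -> Prop :=
  fun x => embed_tile V j (fun i => x i - a i).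

Definition tilable (r : nat) (K : 'I_r -> zmodType)
  (V : forall j : 'I_r, K j -> Prop) (A : prodpt K -> Prop) : Prop :=
  exists C : {j : 'I_r & prodpt K} -> Prop,
    [/\ (forall c, C c -> forall x, copy V (tag c) (tagged c) x -> A x),
        (forall x, A x -> exists c, C c /\ copy V (tag c) (tagged c) x) &
        (forall c c' x, C c -> C c' ->
           copy V (tag c) (tagged c) x -> copy V (tag c') (tagged c') x -> c = c')].

(* The family G_1, ..., G_n, H indexed by 'I_n.+1 (last index = H). *)
Definition ext_fam (n : nat) (Gs : 'I_n -> zmodType) (H : zmodType)
  : 'I_n.+1 -> zmodType :=
  fun i => if unlift ord_max i is Some j then Gs j else H.

Definition ext_tiles (n : nat) (Gs : 'I_n -> zmodType) (H : zmodType)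
  (U : forall j : 'I_n, Gs j -> Prop) (T : H -> Prop)
  : forall i : 'I_n.+1, ext_fam Gs H i -> Prop :=
  fun i => match unlift ord_max i as o
             return (if o is Some j then Gs j else H) -> Prop with
           | Some j => U j
           | None => T
           end.

Definition img (A B : Type) (f : A -> B) (T : A -> Prop) : B -> Prop :=
  fun y => exists x, T x /\ f x = y.

(* Main.v *)
Require Import Defs.
From HB Require Import structures.
From mathcomp Require Import all_boot all_algebra.
From Stdlib Require Import ClassicalEpsilon FunctionalExtensionality.
Set Implicit Arguments. Unset Strict Implicit. Unset Printing Implicit Defensive.
Import GRing.Theory.
Local Open Scope ring_scope.

Definition Fo (n : nat) (Gs : 'I_n -> zmodType) (K : zmodType) (o : option 'I_n)
  : zmodType := if o is Some j then Gs j else K.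

Definition piC (n : nat) (Gs : 'I_n -> zmodType) (G H : zmodType)
  (rho : {additive G -> H}) (o : option 'I_n) : Fo Gs G o -> Fo Gs H o :=
  match o as o return Fo Gs G o -> Fo Gs H o with
  | Some j => id
  | None => rho
  end.

Definition tlo (n : nat) (Gs : 'I_n -> zmodType) (K : zmodType)
  (U : forall j : 'I_n, Gs j -> Prop) (V : K -> Prop) (o : option 'I_n)
  : Fo Gs K o -> Prop :=
  match o as o return Fo Gs K o -> Prop with
  | Some j => U j
  | None => V
  end.

Arguments piC {n Gs G H} rho o _.
Arguments tlo {n Gs K} U V {o} _.

Lemma piCB (n : nat) (Gs : 'I_n -> zmodType) (G H : zmodType) (rho : {additive G -> H}) o (u v : Fo Gs G o) :
  piC rho o (u - v) = piC rho o u - piC rho o v.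
Proof. by case: o u v => [j|] u v //=; rewrite raddfB. Qed.

Lemma piC0 (n : nat) (Gs : 'I_n -> zmodType) (G H : zmodType) (rho : {additive G -> H}) o :
  @piC n Gs G H rho o 0 = 0.
Proof. by case: o => [j|] //=; rewrite raddf0. Qed.

Lemma piC_push (n : nat) (Gs : 'I_n -> zmodType) (G H : zmodType) (rho : {additive G -> H}) (U : forall j : 'I_n, Gs j -> Prop) (T : G -> Prop) o (u v : Fo Gs G o) :
  tlo U T (u - v) -> tlo U (img rho T) (piC rho o u - piC rho o v).
Proof. case: o u v => [j|] u v //= h. by exists (u - v); rewrite raddfB. Qed.

Lemma piC_lift (n : nat) (Gs : 'I_n -> zmodType) (G H : zmodType) (rho : {additive G -> H}) (U : forall j : 'I_n, Gs j -> Prop) (T : G -> Prop) o (u : Fo Gs G o)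
  (a : Fo Gs H o) :
  tlo U (img rho T) (piC rho o u - a) ->
  exists v, piC rho o v = a /\ tlo U T (u - v).
Proof.
case: o u a => [j|] u a /= h.
  by exists a.
case: h => t [Tt rt]; exists (u - t); split.
  by rewrite raddfB rt opprB addrC subrK.
by rewrite opprB addrC subrK.
Qed.

Lemma piC_inj (n : nat) (Gs : 'I_n -> zmodType) (G H : zmodType) (rho : {additive G -> H}) (U : forall j : 'I_n, Gs j -> Prop) (T : G -> Prop) o (u v w : Fo Gs G o) :
  (forall x y : G, T x -> T y -> rho x = rho y -> x = y) ->
  tlo U T (u - v) -> tlo U T (u - w) -> piC rho o v = piC rho o w ->
  v = w.
Proof.
case: o u v w => [j|] u v w inj /= h1 h2 e //.
have := inj _ _ h1 h2; rewrite !raddfB e => /(_ erefl) /eqP.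
by rewrite -subr_eq0 opprB addrC addrA subrK subr_eq0 => /eqP.
Qed.

Theorem proposition17 (n : nat) (Gs : 'I_n -> zmodType) (G H : zmodType)
  (U : forall j : 'I_n, Gs j -> Prop) (T : G -> Prop)
  (rho : {additive G -> H}) :
  (forall j, tile (U j)) -> tile T ->
  (forall h : H, exists g : G, rho g = h) ->
  (forall x y : G, T x -> T y -> rho x = rho y -> x = y) ->
  tilable (ext_tiles U (img rho T)) (fun _ => True) ->
  tilable (ext_tiles U T) (fun _ => True).
Proof.
move=> _ _ _ inj [C [_ cov disj]].
pose pi (b : prodpt (ext_fam Gs G)) : prodpt (ext_fam Gs H) :=
  fun i => piC rho (unlift ord_max i) (b i).
have push : forall j b x, copy (ext_tiles U T) j b x ->
    copy (ext_tiles U (img rho T)) j (pi b) (pi x).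
  move=> j b x [h1 h2]; split.
    exact (piC_push rho (o := unlift ord_max j) (u := x j) (v := b j) h1).
  move=> i /h2 e; rewrite /pi -piCB.
  rewrite /= in e *; rewrite e; exact: piC0.
exists (fun c => C (existT _ (tag c) (pi (tagged c)))); split.
- by [].
- move=> x _; have [[j a] [Cc [h1 h2]]] := cov (pi x) I.
  have ex : forall i, exists u : ext_fam Gs G i,
      piC rho (unlift ord_max i) u = a i /\
      (i = j -> ext_tiles U T (x i - u)) /\ (i != j -> x i - u = 0).
    move=> i; case: (eqVneq i j) => [->|ne].
      have [v [e1 e2]] := piC_lift (o := unlift ord_max j) (u := x j) (a := a j) h1.
      by exists v; split=> //; split=> // _.
    exists (x i); split; last by split=> [eij|_]; [by rewrite eij eqxx in ne | rewrite subrr].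
    by apply/eqP; rewrite -subr_eq0; apply/eqP; apply: h2.
  pose b i := proj1_sig (constructive_indefinite_description _ (ex i)).
  have bP i := proj2_sig (constructive_indefinite_description _ (ex i)).
  have pb : pi b = a.
    by apply: functional_extensionality_dep => i; case: (bP i).
  exists (existT _ j b) => /=; rewrite pb; split=> //; split.
    by case: (bP j) => _ [/(_ erefl) //].
  by move=> i ne; case: (bP i) => _ [_ ->].
- move=> [j b] [j' b'] x /= C1 C2 h h'.
  have := disj _ _ (pi x) C1 C2 (push _ _ _ h) (push _ _ _ h') => e.
  have ej : j = j' by have := congr1 tag e.
  subst j'.
  have eb : pi b = pi b' by have := congr1 (@tagged 'I_n.+1 (fun=> prodpt (ext_fam Gs H))) e.
  congr existT; apply: functional_extensionality_dep => i.
  case: (eqVneq i j) => [->|ne].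
    apply: (piC_inj (U := U) (T := T) (o := unlift ord_max j) (u := x j) inj h.1 h'.1).
    exact: (congr1 (fun f => f j) eb).
  have e1 := h.2 i ne; have e2 := h'.2 i ne.
  by move/eqP: e1; rewrite subr_eq0 => /eqP <-; move/eqP: e2; rewrite subr_eq0 => /eqP.
Qed.
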